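(* For every $\delta>0$ there exist an instance of a sequential first-price auction with two additive buyers, a selling order and a tie-breaking rule, and a pure subgame perfect equilibrium whose revenue is at most $\delta$ times the Walrasian revenue $\sum_{j\in M}\big(\text{second-highest value } v_{i,j}\text{ among the buyers}\big)$. That is, there are subgame perfect equilibria for additive buyers whose ratio of revenue to the Walrasian revenue is vanishing.
   Context: Setting: a set $M$ of $m$ items and a set of buyers; buyer $i$ is additive, i.e. there are $v_{i,j}\ge 0$ with $v_i(S)=\sum_{j\in S}v_{i,j}$, and utilities are quasi-linear. Items are sold one at a time, each by a sealed-bid first-price auction without reserve price (a highest bidder wins, ties broken by a seller-chosen rule, the winner pays his bid); the seller fixes the selling order and tie-breaking rule. Full information. A pure subgame perfect equilibrium is a profile of pure strategies that is a Nash equilibrium in every subgame; its revenue is the total payment on the equilibrium path. For additive buyers the minimum Walrasian revenue equals the sum over items of the second-highest value for that item, which is the Walrasian revenue used here. *)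

(* Defs.v *)
From HB Require Import structures.
From mathcomp Require Import all_boot all_order all_algebra.
From mathcomp Require Import reals.
Set Implicit Arguments. Unset Strict Implicit. Unset Printing Implicit Defensive.
Import Order.TTheory GRing.Theory Num.Theory.
Local Open Scope ring_scope.

Definition bids (R : Type) (n : nat) := {ffun 'I_n -> R}.
Definition history (R : Type) (n : nat) := seq (bids R n).

Definition bid0 (R : numDomainType) (n : nat) : bids R n := [ffun => 0].

Definition is_tiebreak (R : numDomainType) (n : nat)
  (tb : history R n -> bids R n -> 'I_n) : Prop :=
  forall (h : history R n) (b : bids R n) (i : 'I_n), b i <= b (tb h b).

Fixpoint play_from (R : Type) (n : nat) (s : 'I_n -> history R n -> R)
    (k : nat) (h : history R n) : history R n :=
  match k with
  | 0 => h
  | k'.+1 => play_from s k' (rcons h [ffun i => s i h])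
  end.

Definition outcome (R : Type) (n m : nat) (s : 'I_n -> history R n -> R)
    (h : history R n) : history R n :=
  play_from s (m - size h) h.

Definition stage_winner (R : numDomainType) (n : nat)
    (tb : history R n -> bids R n -> 'I_n) (H : history R n) (k : nat) : 'I_n :=
  tb (take k H) (nth (bid0 R n) H k).

Definition stage_price (R : numDomainType) (n : nat)
    (tb : history R n -> bids R n -> 'I_n) (H : history R n) (k : nat) : R :=
  nth (bid0 R n) H k (stage_winner tb H k).

(* Quasi-linear utility of additive buyer i; at stage k item ord k is sold. *)
Definition utility (R : numDomainType) (n m : nat) (v : 'I_n -> 'I_m -> R)
    (ord : 'I_m -> 'I_m) (tb : history R n -> bids R n -> 'I_n)
    (i : 'I_n) (H : history R n) : R :=
  \sum_(k < m) (if stage_winner tb H k == i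
                then v i (ord k) - stage_price tb H k else 0).

Definition revenue (R : numDomainType) (n m : nat)
    (tb : history R n -> bids R n -> 'I_n) (H : history R n) : R :=
  \sum_(k < m) stage_price tb H k.

Definition valid_strategy (R : numDomainType) (n : nat)
    (s' : history R n -> R) : Prop := forall h, 0 <= s' h.

Definition valid_history (R : numDomainType) (n : nat) (h : history R n) : bool :=
  all (fun b : bids R n => [forall i, 0 <= b i]) h.

Definition deviate (R : Type) (n : nat) (s : 'I_n -> history R n -> R)
    (i : 'I_n) (s' : history R n -> R) : 'I_n -> history R n -> R :=
  fun k => if k == i then s' else s k.

Definition is_SPE (R : numDomainType) (n m : nat) (v : 'I_n -> 'I_m -> R)
    (ord : 'I_m -> 'I_m) (tb : history R n -> bids R n -> 'I_n)
    (s : 'I_n -> history R n -> R) : Prop :=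
  (forall i, valid_strategy (s i)) /\
  forall h : history R n, valid_history h -> (size h <= m)%N ->
  forall (i : 'I_n) (s' : history R n -> R), valid_strategy s' ->
    utility v ord tb i (outcome m (deviate s i s') h)
      <= utility v ord tb i (outcome m s h).

(* second-highest value among nonnegative numbers x i (with multiplicity) *)
Definition second_highest (R : realDomainType) (n : nat) (x : 'I_n -> R) : R :=
  \big[Num.max/0]_(i < n) \big[Num.max/0]_(i' < n | i' != i) Num.min (x i) (x i').

Definition walrasian_revenue (R : realDomainType) (n m : nat)
    (v : 'I_n -> 'I_m -> R) : R :=
  \sum_(j < m) second_highest (fun i => v i j).

(* Main.v *)
Require Import Defs.
From mathcomp Require Import all_boot all_order all_algebra all_fingroup reals.
From mathcomp Require Import lra.
Import Order.TTheory GRing.Theory Num.Theory.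
Local Open Scope ring_scope.


Section S.
Variable R : realType.
Definition i0 : 'I_2 := ord0.
Definition i1 : 'I_2 := ord_max.
Definition TB (h : history R 2) (b : bids R 2) : 'I_2 :=
  if (b i0 < b i1) || ((b i0 == b i1) && (size h == 1)%N) then i1 else i0.
Definition ST (i : 'I_2) (h : history R 2) : R :=
  if (size h == 1)%N && ((nth (bid0 R 2) h 0) i0 < (nth (bid0 R 2) h 0) i1) then 1 else 0.
Definition V (i : 'I_2) (j : 'I_2) : R :=
  if (val j == 0)%N then 1 else if (val i == 1)%N then 1 else 0.

Lemma I2 (i : 'I_2) : i = i0 \/ i = i1.
Proof. case: i => [[|[|n]]] Hi //; [left|right]; exact/val_inj. Qed.

Lemma util2 i b c : utility V (1%g : {perm 'I_2}) TB i [:: b; c] =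
  (if TB [::] b == i then V i i0 - b (TB [::] b) else 0) +
  (if TB [:: b] c == i then V i i1 - c (TB [:: b] c) else 0).
Proof.
rewrite /utility big_ord_recr big_ord1 /= !perm1 /stage_price /stage_winner /=.
by [].
Qed.

Lemma rev2 b c : revenue 2 TB [:: b; c] = b (TB [::] b) + c (TB [:: b] c).
Proof. by rewrite /revenue big_ord_recr big_ord1. Qed.
Lemma ne01 : (i0 == i1) = false. Proof. by []. Qed.
Lemma ne10 : (i1 == i0) = false. Proof. by []. Qed.
End S.
Section S.
Variable R : realType.
Lemma case1 (b : bids R 2) i (s' : history R 2 -> R) : valid_strategy s' ->
  utility (@V R) (1%g : {perm 'I_2}) (@TB R) i (outcome 2 (deviate (@ST R) i s') [:: b])
  <= utility (@V R) (1%g : {perm 'I_2}) (@TB R) i (outcome 2 (@ST R) [:: b]).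
Proof.
move=> hs; rewrite /outcome /= !util2 lerD2l.
rewrite /TB /= !ffunE /deviate /ST /=.
case: (I2 i) => ->; rewrite /= /V /=; case: (b i0 < b i1) => /=.
all: have hx := hs [:: b].
all: rewrite ?orbT ?ltxx /=.
all: case: ltrgtP => /= H; rewrite /= ?eqxx /=; try lra.
Qed.
End S.
Section S2.
Variable R : realType.
Lemma case0 i (s' : history R 2 -> R) : valid_strategy s' ->
  utility (@V R) (1%g : {perm 'I_2}) (@TB R) i (outcome 2 (deviate (@ST R) i s') [::])
  <= utility (@V R) (1%g : {perm 'I_2}) (@TB R) i (outcome 2 (@ST R) [::]).
Proof.
move=> hs; rewrite /outcome /= !util2.
set b := [ffun _ => _].
set c := [ffun _ => _].
set b' := [ffun _ => _].
set c' := [ffun _ => _].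
have e1 : b' i0 = 0 by rewrite /b' ffunE.
have e2 : b' i1 = 0 by rewrite /b' ffunE.
have e3 : c' i0 = 0 by rewrite /c' ffunE /ST /= e1 e2 ltxx.
have e4 : c' i1 = 0 by rewrite /c' ffunE /ST /= e1 e2 ltxx.
have hx := hs [::]; have hy := hs [:: b].
case: (I2 i) => ei; subst i.
- have f1 : b i0 = s' [::] by rewrite /b ffunE /deviate eqxx.
  have f2 : b i1 = 0 by rewrite /b ffunE /deviate /=.
  have f3 : c i0 = s' [:: b] by rewrite /c ffunE /deviate eqxx.
  have f4 : c i1 = 0 by rewrite /c ffunE /deviate /ST /= f1 f2 ltNge hx.
  rewrite /TB /= e1 e2 e3 e4 f1 f2 f3 f4 ltxx eqxx /= /V /=.
  case: ltrgtP => /= H; rewrite /= ?eqxx /= ?e1 ?e2 ?f1 ?f2; try lra;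
  case: ltrgtP => /= H'; rewrite /= ?eqxx /= ?f3 ?f4; try lra.
- have f1 : b i1 = s' [::] by rewrite /b ffunE /deviate eqxx.
  have f2 : b i0 = 0 by rewrite /b ffunE /deviate /=.
  have f3 : c i1 = s' [:: b] by rewrite /c ffunE /deviate eqxx.
  have f4 : c i0 = (if 0 < s' [::] then 1 else 0) by rewrite /c ffunE /deviate /ST /= f1 f2.
  rewrite /TB /= e1 e2 e3 e4 f1 f2 f3 f4 ltxx eqxx /= /V /=.
  case: ltrgtP => /= H; rewrite /= ?eqxx /= ?e1 ?e2 ?f1 ?f2; try lra;
  case: ltrgtP => /= H'; rewrite /= ?eqxx /= ?f3 ?f4; try lra.
Qed.
End S2.
Lemma big2 (R : realType) (P : pred 'I_2) (F : 'I_2 -> R) :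
  \big[Num.max/0]_(i < 2 | P i) F i =
  Num.max (if P i0 then F i0 else 0) (Num.max (if P i1 then F i1 else 0) 0).
Proof.
rewrite big_mkcond_idem; last exact: maxxx.
transitivity (\big[Num.max/0]_(i < 2) (if P i then F i else 0)); first by [].
rewrite !big_ord_recl big_ord0 /=.
have -> : lift ord0 ord0 = i1 :> 'I_2 by exact/val_inj.
by [].
Qed.
Lemma W1 (R : realType) : walrasian_revenue (@V R) = 1.
Proof.
rewrite /walrasian_revenue /second_highest !big_ord_recr !big_ord0 /=.
rewrite !big2 /= /V /=.
rewrite !minxx (minC 1 0) !maxxx. rewrite /Order.min /Order.max ltr01 /= ?ltr01 ?ltxx /=.
have h10 : (1 < 0 :> R) = false by rewrite ltNge ler01.
rewrite !h10 /= !ltr01 /= ltxx /= addr0 add0r.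
by []. Qed.


Theorem mainTheorem4 (R : realType) (delta : R) :
  0 < delta ->
  exists (m : nat) (v : 'I_2 -> 'I_m -> R) (ord : {perm 'I_m})
         (tb : history R 2 -> bids R 2 -> 'I_2)
         (s : 'I_2 -> history R 2 -> R),
    [/\ (forall i j, 0 <= v i j),
        is_tiebreak tb,
        is_SPE v ord tb s,
        0 < walrasian_revenue v &
        revenue m tb (outcome m s [::]) <= delta * walrasian_revenue v].
Proof.
move=> hd; exists 2%N, (@V R), 1%g, (@TB R), (@ST R); split.
- move=> i j; rewrite /V; case: ifP => _; first exact: ler01.
  by case: ifP => _; rewrite ?ler01 ?lexx.
- move=> h b i; rewrite /TB; case: (I2 i) => ->.
  + case: ifP => [/orP [/ltW //|/andP [/eqP -> _] //]|_]; exact: lexx.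
  + case: ifP => [_|/norP [H _]]; first exact: lexx.
    by rewrite leNgt H.
- split.
  + move=> i h; rewrite /ST; case: ifP => _; rewrite ?ler01 ?lexx //.
  + move=> h _ hs i s' hs'.
    case: h hs => [|b [|c [|d h]]] //= _.
    * exact: case0.
    * exact: case1.
- by rewrite W1 ltr01.
- rewrite W1 mulr1 /outcome /= rev2 !ffunE.
  have e0 : forall j, ST R j [::] = 0 by move=> j; rewrite /ST.
  have eb : [ffun i => ST R i [::]] = [ffun => 0].
    by apply/ffunP => j; rewrite !ffunE e0.
  have e1 : forall j, ST R j [:: [ffun => 0]] = 0.
    by move=> j; rewrite /ST !ffunE ltxx andbF.
  rewrite eb e0 e1 addr0; exact: ltW.
Qed.
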